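(* Let $I$ be a nonempty open real interval and let $P(u)=\alpha+\beta u+\gamma u^2$ ($\alpha,\beta,\gamma\in\mathbb{R}$) be a polynomial of degree at most two which is positive on $I$. Let $D_P:=\beta^2-4\alpha\gamma$ be its discriminant and let $t\in\,]0,1[\,$ satisfy $(t-\frac12)D_P=0$. Let $\psi$ be a primitive function of $1/P$ on $I$ and let $\ell:=1/\sqrt{P}$. Then the functions $\varphi:=\psi^{-1}$ and $f:=\ell\circ\varphi$, defined on the interval $\psi(I)$, satisfy \[ \big(tf(x)+(1-t)f(y)\big)\varphi(tx+(1-t)y)=tf(x)\varphi(x)+(1-t)f(y)\varphi(y) \qquad\text{for all } x,y\in \psi(I). \] *)

(* Defs.v *)
From Stdlib Require Import Reals.
From Coquelicot Require Import Coquelicot.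
Open Scope R_scope.

Definition in_open_int (a b : Rbar) (u : R) : Prop := Rbar_lt a u /\ Rbar_lt u b.

Definition Pquad (al be ga : R) (u : R) : R := al + be * u + ga * u ^ 2.

Definition discP (al be ga : R) : R := be ^ 2 - 4 * al * ga.

Definition ellP (al be ga : R) (u : R) : R := / sqrt (Pquad al be ga u).

(* Main.v *)
Require Import Defs.
From Stdlib Require Import Reals Lra Psatz.
From Coquelicot Require Import Coquelicot.
Open Scope R_scope.
Lemma alg (al be ga t z v s r : R): 0 < s -> 0 < r -> s*s = Pquad al be ga z -> r*r = Pquad al be ga v ->
  (t-1/2)*(Pquad al be ga z * Pquad al be ga v - r*s*(al + be*(z+v)/2 + ga*z*v)) = 0 -> 0<t<1 ->
  r*((t*r + (1-t)*s) + (1-t)*((be+2*ga*z)/(2*s))*(v-z)) * (s*s) =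
  Pquad al be ga ((t*z*r + (1-t)*v*s)/(t*r + (1-t)*s)) * (t*r + (1-t)*s)^2.
Proof.
intros hs hr Hs Hr Ht ht.
assert (HD : 0 < t*r + (1-t)*s) by nra.
assert (E1 : Pquad al be ga ((t*z*r + (1-t)*v*s)/(t*r + (1-t)*s)) * (t*r + (1-t)*s)^2
  = al*(t*r + (1-t)*s)^2 + be*(t*z*r + (1-t)*v*s)*(t*r + (1-t)*s) + ga*(t*z*r + (1-t)*v*s)^2).
{ unfold Pquad. field. lra. }
rewrite E1.
assert (E2 : r*((t*r + (1-t)*s) + (1-t)*((be+2*ga*z)/(2*s))*(v-z)) * (s*s)
  = r*(t*r + (1-t)*s)*(s*s) + (1-t)*r*s*(be+2*ga*z)*(v-z)/2).
{ field. lra. }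
rewrite E2.
unfold Pquad in *.
assert (K: al*(t*r + (1-t)*s)^2 + be*(t*z*r + (1-t)*v*s)*(t*r + (1-t)*s) + ga*(t*z*r + (1-t)*v*s)^2
  = t*t*(r*r)*(al+be*z+ga*z^2) + (1-t)*(1-t)*(s*s)*(al+be*v+ga*v^2) + t*(1-t)*r*s*(2*al+be*(z+v)+2*ga*z*v)) by field.
rewrite K. rewrite <- Hs, <- Hr.
assert (EK2 : r*(t*r + (1-t)*s)*(s*s) + (1-t)*r*s*(be+2*ga*z)*(v-z)/2
  = t*(r*r)*(s*s) + (1-t)*r*s*((s*s) + (be+2*ga*z)*(v-z)/2)) by field.
rewrite EK2.
assert (Hm : s*s + (be+2*ga*z)*(v-z)/2 = (2*al+be*(z+v)+2*ga*z*v)/2) by (rewrite Hs; field).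
rewrite Hm.
rewrite <- Hs, <- Hr in Ht.
assert (EK3 : forall L R0 : R, L - R0 = 0 -> L = R0) by (intros; lra).
apply EK3.
transitivity ((2)*(1-t)*((t-1/2)*(s*s*(r*r) - r*s*(al+be*(z+v)/2+ga*z*v)))); [field|].
rewrite Ht. lra.
Qed.

Lemma between_l (a b : Rbar) z v l : in_open_int a b z -> in_open_int a b v -> 0 <= l <= 1 ->
  in_open_int a b (z + (v - z) * l).
Proof.
intros [Hz1 Hz2] [Hv1 Hv2] Hl.
assert (E : z + (v - z) * l = (1-l)*z + l*v) by field. rewrite E.
split; destruct a; destruct b; simpl in *; try tauto.
all: try (assert (0 <= (1-l)*(z-r) ) by (apply Rmult_le_pos; lra);
          assert (0 <= l*(v-r)) by (apply Rmult_le_pos; lra);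
          assert (0 < (1-l)*(z-r) + l*(v-r) ) by (destruct (Req_dec l 1); subst; nra); nra).
all: try (assert (0 <= (1-l)*(r0-z) ) by (apply Rmult_le_pos; lra);
          assert (0 <= l*(r0-v)) by (apply Rmult_le_pos; lra);
          assert (0 < (1-l)*(r0-z) + l*(r0-v) ) by (destruct (Req_dec l 1); subst; nra); nra).
all: try (assert (0 <= (1-l)*(r-z) ) by (apply Rmult_le_pos; lra);
          assert (0 <= l*(r-v)) by (apply Rmult_le_pos; lra);
          assert (0 < (1-l)*(r-z) + l*(r-v) ) by (destruct (Req_dec l 1); subst; nra); nra).
Qed.

Lemma between_mm (a b : Rbar) z v w : in_open_int a b z -> in_open_int a b v ->
  Rmin z v <= w <= Rmax z v -> in_open_int a b w.
Proof.
intros [Hz1 Hz2] [Hv1 Hv2] Hw; unfold Rmin, Rmax in Hw; destruct (Rle_dec z v);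
split; destruct a; destruct b; simpl in *; try tauto; lra.
Qed.

Lemma side (a b : Rbar) (al be ga t z v : R) :
  (forall u, in_open_int a b u -> 0 < Pquad al be ga u) ->
  (t - 1 / 2) * discP al be ga = 0 ->
  in_open_int a b z -> in_open_int a b v ->
  (t-1/2)*(Pquad al be ga z * Pquad al be ga v
     - sqrt (Pquad al be ga v) * sqrt (Pquad al be ga z) * (al + be*(z+v)/2 + ga*z*v)) = 0.
Proof.
intros HP HD Hz Hv.
destruct (Req_dec (t - 1/2) 0) as [E|E]; [rewrite E; lra|].
assert (D0 : discP al be ga = 0).
{ apply Rmult_integral in HD; destruct HD; [contradiction| assumption]. }
unfold discP in D0.
set (h := fun w => al + be*(w+v)/2 + ga*w*v).
assert (Hid : forall w, h w * h w = Pquad al be ga w * Pquad al be ga v).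
{ intro w. unfold h, Pquad.
  assert (K: forall X Y : R, X - Y = 0 -> X = Y) by (intros; lra). apply K.
  transitivity ((be ^ 2 - 4 * al * ga) * (w - v)^2 / 4); [field|]. rewrite D0. field. }
assert (Hhv : h v = Pquad al be ga v) by (unfold h, Pquad; field).
assert (Pv := HP v Hv). assert (Pz := HP z Hz).
assert (Hhz : 0 < h z).
{ destruct (Rlt_le_dec 0 (h z)) as [G|G]; [exact G|exfalso].
  set (l := - h z / (h v - h z)).
  assert (Hl : 0 <= l <= 1).
  { unfold l. split.
    - apply Rmult_le_pos; [lra| left; apply Rinv_0_lt_compat; lra].
    - apply (Rmult_le_reg_r (h v - h z)); [lra|]. unfold Rdiv. rewrite Rmult_assoc, Rinv_l; lra. }
  assert (Hw := between_l a b z v l Hz Hv Hl).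
  assert (H0 : h (z + (v - z) * l) = 0).
  { unfold l. rewrite Hhv. unfold h at 1. rewrite <- Hhv. unfold h, Pquad in *. field. lra. }
  assert (Pw := HP _ Hw). specialize (Hid (z + (v - z) * l)). rewrite H0 in Hid. nra. }
assert (Hs : sqrt (Pquad al be ga v) * sqrt (Pquad al be ga z) = h z).
{ assert (A1 := sqrt_lt_R0 _ Pv). assert (A2 := sqrt_lt_R0 _ Pz).
  assert (A3 := sqrt_sqrt _ (Rlt_le _ _ Pv)). assert (A4 := sqrt_sqrt _ (Rlt_le _ _ Pz)).
  specialize (Hid z).
  set (r := sqrt (Pquad al be ga v)) in *. set (s := sqrt (Pquad al be ga z)) in *.
  assert (K : (r*s - h z) * (r*s + h z) = 0).
  { transitivity ((r*r)*(s*s) - h z * h z); [field|]. rewrite A3, A4, Hid. field. }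
  apply Rmult_integral in K. destruct K as [K|K]; [lra|]. assert (0 < r*s) by nra. lra. }
rewrite Hs. unfold h. rewrite <- (Hid z). unfold h.
apply Rmult_eq_0_compat_l. field.
Qed.

Lemma derM (al be ga t v0 r0 z : R) : 0 < Pquad al be ga z -> 0 < r0 -> 0 < t < 1 ->
  is_derive (fun w => (t*w*r0 + (1-t)*v0*sqrt (Pquad al be ga w)) / (t*r0 + (1-t)*sqrt (Pquad al be ga w))) z
    (t*r0*((t*r0 + (1-t)*sqrt (Pquad al be ga z)) + (1-t)*((be+2*ga*z)/(2*sqrt (Pquad al be ga z)))*(v0-z))
      / (t*r0 + (1-t)*sqrt (Pquad al be ga z))^2).
Proof.
intros HP Hr Ht.
assert (Hs := sqrt_lt_R0 _ HP).
unfold Pquad in *.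
assert (HD : 0 < t*r0 + (1-t)*sqrt (al + be * z + ga * z ^ 2)) by nra.
auto_derive; change (z*(z*1)) with (z^2).
- repeat split; lra.
- field. split; lra.
Qed.

Lemma is_derive_eq (f : R -> R) x l l' : l = l' -> is_derive f x l -> is_derive f x l'.
Proof. intros; subst; auto. Qed.

Theorem lemma2p4 (a b : Rbar) (al be ga t : R) (psi phi : R -> R) :
  Rbar_lt a b ->
  (forall u, in_open_int a b u -> 0 < Pquad al be ga u) ->
  0 < t < 1 ->
  (t - 1 / 2) * discP al be ga = 0 ->
  (* psi is a primitive of 1/P on I *)
  (forall u, in_open_int a b u -> is_derive psi u (/ Pquad al be ga u)) ->
  (* phi is the inverse of psi : I -> psi(I) *)
  (forall u, in_open_int a b u -> phi (psi u) = u) ->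
  forall x y : R,
    (exists u, in_open_int a b u /\ psi u = x) ->
    (exists v, in_open_int a b v /\ psi v = y) ->
    let f := fun z => ellP al be ga (phi z) in
    (t * f x + (1 - t) * f y) * phi (t * x + (1 - t) * y)
    = t * f x * phi x + (1 - t) * f y * phi y.
Proof.
intros Hab HP Ht HD Hpsi Hphi x y [u0 [Hu0 Hx]] [v0 [Hv0 Hy]] f.
subst x y. unfold f, ellP. rewrite !Hphi by assumption.
set (P := Pquad al be ga) in *.
assert (Pv := HP v0 Hv0). assert (Pu := HP u0 Hu0).
set (r0 := sqrt (P v0)).
assert (Hr0 : 0 < r0) by (apply sqrt_lt_R0; exact Pv).
assert (Hr0s : r0 * r0 = P v0) by (apply sqrt_sqrt; lra).
set (S := fun w => sqrt (P w)).
set (M := fun w => (t*w*r0 + (1-t)*v0*S w) / (t*r0 + (1-t)*S w)).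
assert (MI : forall z, in_open_int a b z -> in_open_int a b (M z)).
{ intros z Hz. assert (Pz := HP z Hz). assert (Hs : 0 < S z) by (apply sqrt_lt_R0; exact Pz).
  assert (HDn : 0 < t*r0 + (1-t)*S z) by nra.
  assert (E : M z = z + (v0 - z) * ((1-t)*S z / (t*r0 + (1-t)*S z))).
  { unfold M. field. lra. }
  rewrite E. apply between_l; try assumption. split.
  - apply Rmult_le_pos; [nra| left; apply Rinv_0_lt_compat; lra].
  - apply (Rmult_le_reg_r (t*r0 + (1-t)*S z)); [lra|]. unfold Rdiv.
    assert (0 < t*r0) by nra; rewrite Rmult_assoc, Rinv_l; lra. }
set (g := fun w => psi (M w) - t * psi w).
set (dg := fun w => (t*r0*((t*r0 + (1-t)*S w) + (1-t)*((be+2*ga*w)/(2*S w))*(v0-w))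
      / (t*r0 + (1-t)*S w)^2) * / P (M w) - t * / P w).
assert (Hg : forall z, in_open_int a b z -> is_derive g z (dg z)).
{ intros z Hz. 
  assert (H1 := derM al be ga t v0 r0 z (HP z Hz) Hr0 Ht).
  assert (H2 := Hpsi (M z) (MI z Hz)).
  assert (H3 := is_derive_comp psi M z _ _ H2 H1).
  assert (H4 := is_derive_scal psi z t _ (Hpsi z Hz)).
  assert (H5 := is_derive_minus _ _ z _ _ H3 H4).
  assert (H6 : is_derive g z (minus (scal (t * r0 * (t * r0 + (1 - t) * sqrt (Pquad al be ga z) +
         (1 - t) * ((be + 2 * ga * z) / (2 * sqrt (Pquad al be ga z))) * (v0 - z)) /
      (t * r0 + (1 - t) * sqrt (Pquad al be ga z)) ^ 2) (/ Pquad al be ga (M z))) (t * / Pquad al be ga z))).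
  { eapply is_derive_ext; [|exact H5]. intro w. unfold g, minus, plus, opp; simpl. reflexivity. }
  revert H6. apply is_derive_eq. unfold dg, minus, plus, opp, scal; simpl. unfold mult; simpl. reflexivity. }
assert (Hdg0 : forall z, in_open_int a b z -> dg z = 0).
{ intros z Hz. unfold dg. assert (Pz := HP z Hz).
  assert (Hs : 0 < S z) by (apply sqrt_lt_R0; exact Pz).
  assert (Hss : S z * S z = P z) by (apply sqrt_sqrt; lra).
  assert (HDn : 0 < t*r0 + (1-t)*S z) by nra.
  assert (PM := HP _ (MI z Hz)).
  assert (Hal := alg al be ga t z v0 (S z) r0 Hs Hr0 Hss Hr0s).
  assert (Hsd := side a b al be ga t z v0 HP HD Hz Hv0).
  specialize (Hal Hsd Ht).
  fold P in Hal. change ((t*z*r0 + (1-t)*v0*S z) / (t*r0 + (1-t)*S z)) with (M z) in Hal.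
  assert (K : forall A B0 : R, A = B0 -> A - B0 = 0) by (intros; lra). apply K.
  clear K. rewrite <- Hss.
  set (X := (t * r0 + (1 - t) * S z + (1 - t) * ((be + 2 * ga * z) / (2 * S z)) * (v0 - z))) in *.
  transitivity (t * (r0 * X * (S z * S z)) / ((t * r0 + (1 - t) * S z) ^ 2 * P (M z) * (S z * S z))).
  { field. repeat split; lra. }
  rewrite Hal. field. repeat split; lra. }
assert (Key : g u0 = g v0).
{ destruct (MVT_gen g v0 u0 dg) as [c [Hc Hc2]].
  - intros z Hz. apply Hg. apply (between_mm a b v0 u0 z Hv0 Hu0). lra.
  - intros z Hz.
    assert (Hz' := between_mm a b v0 u0 z Hv0 Hu0 Hz).
    assert (Hc := ex_derive_continuous (K:=R_AbsRing) (V:=R_NormedModule) g z (ex_intro _ _ (Hg z Hz'))).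
    apply continuity_pt_filterlim; exact Hc.
  - rewrite Hdg0 in Hc2. lra. apply (between_mm a b v0 u0 c Hv0 Hu0). exact Hc. }
assert (Mv : M v0 = v0). { unfold M. change (S v0) with r0. field. lra. }
unfold g in Key. rewrite Mv in Key.
assert (Key2 : t * psi u0 + (1 - t) * psi v0 = psi (M u0)) by lra.
rewrite Key2, Hphi by (apply MI; exact Hu0).
assert (Hs : 0 < S u0) by (apply sqrt_lt_R0; exact Pu).
change (sqrt (P u0)) with (S u0).
assert (HDn : 0 < t*r0 + (1-t)*S u0) by nra.
unfold M. field. repeat split; lra.
Qed.
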